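(* Let $S=\{132,231,321\}$, and let $t_n$ and $f_n$ be the numbers of rooted labeled trees and forests on $[n]$ avoiding $S$, with exponential generating functions $T(x)=\sum_{n\ge0}\frac{t_n}{n!}x^n$ and $F(x)=\sum_{n\ge0}\frac{f_n}{n!}x^n$. Then $t_n=n!$ for all $n\ge1$, $T(x)=\frac{x}{1-x}$, $F(x)=e^{x/(1-x)}$, and $\lim_{n\to\infty}\frac{f_n^{1/n}}{n}=e^{-1}$.
   Context: A rooted labeled forest on $[n]$ is an unordered forest on $n$ vertices, each component with a distinguished root, with distinct labels from $[n]$; a rooted labeled tree is a connected one. An instance of a pattern (permutation) $\pi$ of $[k]$ is a sequence of vertices $v_1,\dots,v_k$ with $v_i$ a strict ancestor of $v_{i+1}$ whose labels are in the same relative order as $\pi$; a forest avoids $S$ if it contains no instance of any pattern in $S$. *)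

(* Defs.v *)
From mathcomp Require Import all_boot.
Set Implicit Arguments. Unset Strict Implicit. Unset Printing Implicit Defensive.

(* A rooted labeled forest on [n] (labels 0..n-1, order-isomorphic to 1..n) is
   encoded by its parent map: par v = Some w if w is the parent of v,
   par v = None if v is a root.  Such a map encodes a forest iff it is acyclic. *)
Definition parent_map (n : nat) := {ffun 'I_n -> option 'I_n}.

(* [anc par a b] : a is a strict ancestor of b, i.e. a is reached from b by
   following parents k >= 1 times (k <= n suffices). *)
Definition anc (n : nat) (par : parent_map n) (a b : 'I_n) : bool :=
  [exists k : 'I_n.+1, (0 < k) && (iter k (fun o => obind par o) (Some b) == Some a)].

Definition acyclic (n : nat) (par : parent_map n) : bool :=
  [forall v, ~~ anc par v v].

Definition is_forest n (par : parent_map n) : bool := acyclic par.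

Definition is_tree n (par : parent_map n) : bool :=
  acyclic par && (#|[set v | par v == None]| == 1).

Definition contains (n : nat) (par : parent_map n) (pi : seq nat) : bool :=
  [exists vs : (size pi).-tuple 'I_n,
     sorted (anc par) vs &&
     [forall i : 'I_(size pi), forall j : 'I_(size pi),
        (tnth vs i < tnth vs j) == (nth 0 pi i < nth 0 pi j)]].

Definition avoids (n : nat) (par : parent_map n) (S : seq (seq nat)) : bool :=
  all (fun pi => ~~ contains par pi) S.

Definition S0 : seq (seq nat) := [:: [:: 1; 3; 2]; [:: 2; 3; 1]; [:: 3; 2; 1]].

Definition t_S (n : nat) : nat := #|[set par : parent_map n | is_tree par && avoids par S0]|.
Definition f_S (n : nat) : nat := #|[set par : parent_map n | is_forest par && avoids par S0]|.

(* Main.v *)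
Require Import Defs.
From mathcomp Require Import all_boot.
From Stdlib Require Import Reals.
From Coquelicot Require Import Coquelicot.
Open Scope R_scope.
From mathcomp Require Import zify.
From Stdlib Require Import Lra Lia.
Set Implicit Arguments. Unset Strict Implicit. Unset Printing Implicit Defensive.

Open Scope nat_scope.
Section Comb1.
Variable n : nat.
Implicit Type par : parent_map n.

Definition good par : bool :=
  [forall v, forall w, (par v == Some w) ==> ((par w == None) || (w < v))].

Lemma iter_None par k : iter k (fun o => obind par o) None = None.
Proof. by elim: k => //= k ->. Qed.

Lemma chain_lt par : good par -> forall k b a, 0 < k ->
  iter k (fun o => obind par o) (Some b) = Some a -> par a != None -> a < b.
Proof.
move=> /forallP G; elim=> // k IH b a _.
rewrite iterS.
case Ek: (iter k _ (Some b)) => [c|]; last by rewrite /=.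
move=> /= Pc Pa.
have /forallP/(_ a)/implyP/(_ (introT eqP Pc)) := G c.
rewrite (negbTE Pa) /= => ac.
case: k IH Ek => [|k] IH Ek.
  by move: Ek => /= [->].
apply: ltn_trans ac (IH b c _ Ek _) => //.
by rewrite Pc.
Qed.

Lemma anc_nonroot par a b : anc par a b -> par b != None.
Proof.
case/existsP=> k /andP [k0 /eqP E].
apply/negP => /eqP Pb.
case: k k0 E => [[|k] Hk] // _ /=.
by rewrite -iterS iterSr /= Pb iter_None.
Qed.

Lemma good_acyclic par : good par -> acyclic par.
Proof.
move=> G; apply/forallP => v; apply/negP => A.
have Pv := anc_nonroot A.
case/existsP: A => k /andP [k0 /eqP E].
have H := chain_lt G k0 E. by move: (H Pv); rewrite ltnn.
Qed.

Lemma anc_lt par a b : good par -> anc par a b -> par a != None -> a < b.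
Proof.
move=> G /existsP [k /andP [k0 /eqP E]] Pa.
have H := chain_lt G k0 E. exact: H Pa.
Qed.

End Comb1.

Section Comb2.
Variable n : nat.
Implicit Type par : parent_map n.

Lemma anc_par par a b : par b = Some a -> anc par a b.
Proof.
move=> E; apply/existsP.
have n1 : 1 < n.+1 by rewrite ltnS (leq_ltn_trans _ (ltn_ord b)).
exists (Ordinal n1) => /=.
by rewrite E.
Qed.

Lemma good_notcontains par a b c : c < b -> good par -> ~~ contains par [:: a; b; c].
Proof.
move=> cb G; apply/negP => /existsP [[[|x0 [|x1 [|x2 [|]]]] //= Hs]].
case/andP => /andP [A01 /andP [A12 _]] /forallP /(_ (@Ordinal 3 2 isT)) /forallP /(_ (@Ordinal 3 1 isT)).
rewrite /= (tnth_nth x0) /= (tnth_nth x0) /= cb => /eqP.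
move=> H21; have H12 := anc_lt G A12 (anc_nonroot A01). lia.
Qed.


Lemma contains3 par a b c u w v : par w = Some u -> par v = Some w ->
  (u < w) = (a < b) -> (w < u) = (b < a) -> (u < v) = (a < c) ->
  (v < u) = (c < a) -> (w < v) = (b < c) -> (v < w) = (c < b) ->
  contains par [:: a; b; c].
Proof.
move=> Pw Pv e1 e2 e3 e4 e5 e6; apply/existsP.
exists [tuple u; w; v]; apply/andP; split.
  by rewrite /= (anc_par Pw) (anc_par Pv).
apply/forallP => i; apply/forallP => j.
case: i => [[|[|[|i]]] Hi] //; case: j => [[|[|[|j]]] Hj] //;
  by rewrite /= !(tnth_nth u) /= ?ltnn ?e1 ?e2 ?e3 ?e4 ?e5 ?e6.
Qed.

Lemma anc2 par v w : par v = Some w -> par w = Some v -> v != w -> anc par v v.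
Proof.
move=> Pv Pw vw; apply/existsP.
have n2 : 2 < n.+1.
  have := ltn_ord v; have := ltn_ord w; move: vw; rewrite -val_eqE /=; lia.
exists (Ordinal n2) => /=.
by rewrite Pv /= Pw.
Qed.

Lemma good_avoids par : good par -> avoids par S0.
Proof. by move=> G; rewrite /avoids /S0 /= !good_notcontains. Qed.

Lemma avoids_good par : acyclic par -> avoids par S0 -> good par.
Proof.
move=> /forallP Ac; rewrite /avoids /S0 /= => /and4P [N1 N2 N3 _].
apply/forallP => v; apply/forallP => w; apply/implyP => /eqP Pv.
case Pw: (par w) => [u|] //=.
rewrite ltnNge; apply/negP => vw.
have [evw|nvw] := eqVneq v w.
  by move: (Ac v); rewrite {1}evw (anc_par Pv).
have [euw|nuw] := eqVneq u w.
  by move: (Ac w); rewrite -{1}euw (anc_par Pw).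
have [euv|nuv] := eqVneq u v.
  by move: (Ac v); rewrite (anc2 Pv _ nvw) // Pw euv.
move: nvw nuw nuv; rewrite -!val_eqE /= => nvw nuw nuv.
have vw' : v < w by lia.
case: (ltnP u v) => uv.
  move/negP: N1; apply; apply: (contains3 Pw Pv); lia.
case: (ltnP u w) => uw.
  move/negP: N2; apply; apply: (contains3 Pw Pv); lia.
move/negP: N3; apply; apply: (contains3 Pw Pv); lia.
Qed.

End Comb2.

Section Comb3.
Variable n : nat.
Implicit Type par : parent_map n.

Definition rootset par : {set 'I_n} := [set v | par v == None].

Definition FR (R : {set 'I_n}) (v : 'I_n) : {set option 'I_n} :=
  if v \in R then [set None] else Some @: [set w | (w \in R) || (w < v)].

Lemma family_FR R par :
  (par \in finfun.family (fun v => mem (FR R v))) = good par && (rootset par == R).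
Proof.
apply/familyP/andP.
  move=> H; have rootsR : rootset par = R.
    apply/setP => v; rewrite inE; have := H v; rewrite /FR.
    case: (v \in R); first by rewrite inE.
    by case/imsetP => w _ ->.
  split; last by rewrite rootsR.
  apply/forallP => v; apply/forallP => w; apply/implyP => /eqP Pv.
  have := H v; rewrite /FR Pv; case: (v \in R); first by rewrite inE.
  case/imsetP => w' ; rewrite inE => /orP [wR|wv] [->].
    by move: wR; rewrite -rootsR inE => ->.
  by rewrite wv orbT.
case=> /forallP G /eqP rootsR v; rewrite /FR.
case vR: (v \in R).
  by move: vR; rewrite -rootsR !inE.
case Pv: (par v) => [w|]; last by move: vR; rewrite -rootsR inE Pv.
apply/imsetP; exists w => //; rewrite inE.
have /forallP/(_ w)/implyP/(_ (introT eqP Pv)) := G v.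
by case/orP => [Pw|->]; [rewrite -rootsR inE Pw | rewrite orbT].
Qed.

End Comb3.

Definition rising k d := \prod_(0 <= i < d) (k + i).

Lemma prod_rising (Q : nat -> bool) k m :
  \prod_(0 <= v < m | Q v) (k + \sum_(0 <= w < v | Q w) 1) =
  rising k (\sum_(0 <= v < m | Q v) 1).
Proof.
elim: m => [|m IH]. by rewrite /rising !big_geq.
rewrite big_mkcond big_nat_recr //= -big_mkcond /= IH.
rewrite [in RHS]big_mkcond big_nat_recr //= -[in RHS]big_mkcond /=.
case: (Q m); last by rewrite muln1 addn0.
by rewrite /rising addn1 big_nat_recr.
Qed.

Section Comb4.
Variable n : nat.
Implicit Type par : parent_map n.

Lemma card_roots (R : {set 'I_n}) :
  #|[set par : parent_map n | good par && (rootset par == R)]| = rising #|R| (n - #|R|).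
Proof.
have -> : #|[set par : parent_map n | good par && (rootset par == R)]| =
   #|finfun.family (fun v => mem (FR R v))|.
  by apply: eq_card => par; rewrite inE family_FR.
rewrite card_family foldrE big_map big_enum /=.
pose Q i := if insub i is Some w then (w : 'I_n) \notin R else false.
have QE (w : 'I_n) : Q w = (w \notin R) by rewrite /Q valK.
have cardF (v : 'I_n) : #|FR R v| = if v \notin R then #|R| + \sum_(0 <= w < v | Q w) 1 else 1.
  rewrite /FR; case: (v \in R); first by rewrite cards1.
  rewrite card_imset; last by move=> x y [].
  rewrite -(cardsID R) /=.
  have -> : [set w | (w \in R) || (w < v)] :&: R = R.
    by apply/setP => w; rewrite !inE; case: (w \in R); rewrite ?andbF ?andbT ?orbT.
  congr (_ + _).
  rewrite -sum1_card (big_nat_widen _ _ _ _ _ (ltnW (ltn_ord v))) big_mkord.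
  by apply: eq_bigl => w; rewrite !inE QE; case: (w \in R); rewrite ?andbF ?andbT.
rewrite (eq_bigr _ (fun v _ => cardF v)) -big_mkcondr /=.
rewrite (eq_bigl (fun v => v \notin R)) //.
have -> : n - #|R| = \sum_(0 <= v < n | Q v) 1.
  rewrite big_mkord -{1}(card_ord n) -(cardsC R) addKn -sum1_card.
  by apply: eq_bigl => w; rewrite !inE QE.
rewrite -prod_rising big_mkord.
by apply: eq_big => [v|v _]; rewrite ?QE.
Qed.
End Comb4.

Definition Lah n k := 'C(n, k) * rising k (n - k).

Section Comb5.
Variable n : nat.

Lemma cardR (R : {set 'I_n}) : #|R| < n.+1.
Proof. by rewrite ltnS -[X in _ <= X](card_ord n) max_card. Qed.

Lemma card_good_P (P : pred nat) :
  #|[set par : parent_map n | good par && P #|rootset par|]| =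
  \sum_(k < n.+1 | P k) Lah n k.
Proof.
rewrite -sum1_card (partition_big (@rootset n) (fun R => P #|R|)); last first.
  by move=> par; rewrite inE => /andP [].
rewrite /=.
transitivity (\sum_(R : {set 'I_n} | P #|R|) rising #|R| (n - #|R|)).
  apply: eq_bigr => R PR; rewrite -card_roots -sum1_card.
  apply: eq_bigl => par; rewrite !inE.
  by case: (rootset par =P R) => [->|]; rewrite ?PR ?andbT ?andbF.
rewrite (partition_big (fun R : {set 'I_n} => (inord #|R| : 'I_n.+1)) (fun k : 'I_n.+1 => P k)); last first.
  move=> R PR /=; rewrite inordK // cardR.
all: try done.
have E (k : 'I_n.+1) : P k -> \sum_(R : {set 'I_n} | P #|R| && (inord #|R| == k)) rising #|R| (n - #|R|) = Lah n k.
  move=> Pk.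
  transitivity (\sum_(R : {set 'I_n} | #|R| == k) rising k (n - k)).
    apply: eq_big => R.
      apply/andP/eqP => [[_ /eqP <-]|Rk].
        by rewrite inordK // cardR.
      by rewrite Rk Pk; split => //; apply/eqP; apply: val_inj; rewrite /= inordK.
    by case/andP => _ /eqP <-; rewrite inordK // cardR.
  rewrite sum_nat_const /Lah; congr (_ * _).
  by rewrite -[n in 'C(n, _)](card_ord n) -card_draws; apply: eq_card => R; rewrite !inE.
exact: (eq_bigr _ E).
Qed.

End Comb5.

Lemma f_S_Lah n : f_S n = \sum_(k < n.+1) Lah n k.
Proof.
rewrite /f_S -(card_good_P n predT); apply: eq_card => par; rewrite !inE andbT.
apply/andP/idP => [[F A]|G]; first exact: avoids_good.
by split; [exact: good_acyclic | exact: good_avoids].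
Qed.

Lemma t_S_Lah n : t_S n = \sum_(k < n.+1 | (k : nat) == 1) Lah n k.
Proof.
rewrite /t_S -(card_good_P n (fun k : nat => k == 1)); apply: eq_card => par; rewrite !inE.
apply/andP/andP => [[/andP [F R] A]|[G R]]; first by split => //; exact: avoids_good.
split; last exact: good_avoids.
by rewrite /is_tree good_acyclic.
Qed.

Lemma rising1 d : rising 1 d = d`!.
Proof.
elim: d => [|d IH]; first by rewrite /rising big_geq.
by rewrite /rising big_nat_recr //= -/(rising 1 d) IH factS mulnC add1n.
Qed.

Lemma t_S_fact n : 1 <= n -> t_S n = n`!.
Proof.
move=> n1; rewrite t_S_Lah (big_pred1 (inord 1)); last first.
  move=> k /=; apply/eqP/eqP => [k1|->]; last by rewrite inordK.
  by apply: val_inj; rewrite /= inordK.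
rewrite inordK // /Lah bin1 rising1; case: n n1 => // n _.
by rewrite factS subSS subn0.
Qed.

Lemma t_S0 : t_S 0 = 0.
Proof. by rewrite t_S_Lah big1 // => -[[|k] Hk]. Qed.

Lemma rising_fact j d : rising j.+1 d * j`! = (j + d)`!.
Proof.
elim: d => [|d IH]; first by rewrite /rising big_geq // mul1n addn0.
rewrite /rising big_nat_recr //= -/(rising j.+1 d) mulnAC IH addnS factS.
by rewrite mulnC addSn.
Qed.

Lemma Lah_fact m j : j <= m -> Lah m.+1 j.+1 * j.+1`! = m.+1`! * 'C(m, j).
Proof.
move=> jm.
have pos : 0 < j`! * (m - j)`! by rewrite muln_gt0 !fact_gt0.
apply/eqP; rewrite -(eqn_pmul2r pos); apply/eqP.
rewrite -[RHS]mulnA bin_fact // /Lah subSS.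
have h1 := rising_fact j (m - j); rewrite subnKC // in h1.
have h2 := @bin_fact m.+1 j.+1 jm; rewrite subSS in h2.
move: h1 h2.
move: ('C(m.+1, j.+1)) (rising j.+1 (m - j)) (j.+1`!) (j`!) ((m - j)`!) (m`!) (m.+1`!) => a b c d e f g h1 h2.
rewrite -h1 -h2; nia.
Qed.

Lemma Lah0 m : Lah m.+1 0 = 0.
Proof. by rewrite /Lah /rising big_nat_recl. Qed.

Lemma Lah_big m j : m < j -> Lah m.+1 j.+1 = 0.
Proof. by move=> mj; rewrite /Lah bin_small. Qed.

Lemma hockey m j : \sum_(k < m.+1) 'C(k, j) = 'C(m.+1, j.+1).
Proof.
elim: m => [|m IH]; first by rewrite big_ord1; case: j.
by rewrite big_ord_recr /= IH [in RHS]binS.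
Qed.

Lemma bin_le m j : 'C(m, j) * j`! <= expn m j.
Proof.
rewrite bin_ffact ffact_prod.
apply: leq_trans (leq_prod (fun (i : 'I_j) _ => leq_subr i m)) _.
rewrite big_const_ord.
suff -> : iter j (muln m) 1 = expn m j by [].
by elim: (j) => //= k ->; rewrite expnS.
Qed.

Open Scope R_scope.

Lemma INR_muln (a b : nat) : INR (a * b)%nat = INR a * INR b.
Proof. exact: mult_INR. Qed.
Lemma INR_addn (a b : nat) : INR (a + b)%nat = INR a + INR b.
Proof. exact: plus_INR. Qed.

Lemma fact_eq n : n`! = Factorial.fact n.
Proof. elim: n => // n IH; rewrite factS IH //. Qed.

Lemma INR_sum m (F : nat -> nat) : INR (\sum_(j < m.+1) F j)%nat = sum_n (fun j => INR (F j)) m.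
Proof.
elim: m => [|m IH]; first by rewrite big_ord1 sum_O.
by rewrite big_ord_recr /= INR_addn IH sum_Sn.
Qed.

Lemma sum_n_mulr (f : nat -> R) c m : sum_n (fun j => f j * c) m = sum_n f m * c.
Proof.
elim: m => [|m IH]; first by rewrite !sum_O.
by rewrite !sum_Sn IH /plus /=; ring.
Qed.

Definition a n := INR (f_S n) / INR (Factorial.fact n).

Lemma a0 : a 0 = 1.
Proof. rewrite /a f_S_Lah big_ord1 /Lah /rising big_geq //=; field. Qed.

Lemma fact_pos n : 0 < INR (Factorial.fact n).
Proof. apply: lt_0_INR; apply/ltP; rewrite -fact_eq fact_gt0 //. Qed.

Lemma aS m : a (S m) = sum_n (fun j => INR ('C(m, j)) / INR (Factorial.fact (S j))) m.
Proof.
rewrite /a f_S_Lah big_ord_recl Lah0 add0n.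
rewrite (eq_bigr (fun j : 'I_m.+1 => Lah m.+1 j.+1)); last by move=> j _; rewrite lift0.
rewrite (INR_sum m (fun j => Lah m.+1 j.+1)).
have Fm := fact_pos (S m).
rewrite /Rdiv -sum_n_mulr; apply: sum_n_ext_loc => j jm.
have jm' : (j <= m)%nat by apply/leP.
have Fj := fact_pos (S j).
have H := Lah_fact jm'; rewrite !fact_eq in H.
have H' : INR (Lah m.+1 j.+1) * INR (Factorial.fact j.+1) = INR (Factorial.fact m.+1) * INR 'C(m, j).
  by rewrite -!INR_muln H.
apply: (Rmult_eq_reg_r (INR (Factorial.fact (S j)))); last by apply: Rgt_not_eq.
rewrite Rmult_assoc (Rmult_comm (/ _)) -Rmult_assoc H'; field; split; apply: Rgt_not_eq => //.
Qed.

Lemma ser_lim (u : nat -> R) (l : R) : is_series u l -> is_lim_seq (sum_n u) l.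
Proof. intros H; exact H. Qed.
Lemma lim_ser (u : nat -> R) (l : R) : is_lim_seq (sum_n u) l -> is_series u l.
Proof. intros H; exact H. Qed.

Lemma sum_n_sub (f g : nat -> R) M : sum_n (fun j => f j - g j) M = sum_n f M - sum_n g M.
Proof.
elim: M => [|M IH]; first by rewrite !sum_O.
by rewrite !sum_Sn IH /plus /=; ring.
Qed.

Lemma sum_n_abs (f : nat -> R) M : Rabs (sum_n f M) <= sum_n (fun j => Rabs (f j)) M.
Proof.
elim: M => [|M IH]; first by rewrite !sum_O; lra.
rewrite !sum_Sn /plus /=.
apply: Rle_trans (Rabs_triang _ _) _; lra.
Qed.

Lemma sum_n_le' (f g : nat -> R) M : (forall j, (j <= M)%coq_nat -> f j <= g j) -> sum_n f M <= sum_n g M.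
Proof.
elim: M => [|M IH] H; first by rewrite !sum_O; apply: H.
rewrite !sum_Sn /plus /=.
have := H (S M) (le_n _); have := IH (fun j jM => H j (le_S _ _ jM)); lra.
Qed.

Lemma sum_mono (u : nat -> R) N M : (forall n, 0 <= u n) -> (N <= M)%coq_nat -> sum_n u N <= sum_n u M.
Proof.
move=> H; elim: M => [|M IH] NM.
  have -> : N = 0%nat by lia.
  lra.
case: (Nat.eq_dec N (S M)) => [->|NM']; first lra.
rewrite sum_Sn /plus /=; have := IH ltac:(lia); have := H (S M); lra.
Qed.

Lemma partial_le (u : nat -> R) l N : (forall n, 0 <= u n) -> is_series u l -> sum_n u N <= l.
Proof.
move=> H Hs.
have := is_lim_seq_le_loc (fun _ => sum_n u N) (sum_n u) (sum_n u N) l _ (is_lim_seq_const _) (ser_lim Hs).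
apply.
by exists N => n Nn; apply: sum_mono.
Qed.

Lemma tail_bound (u : nat -> R) l L M : is_series u l -> is_series (fun n => Rabs (u n)) L ->
  Rabs (l - sum_n u M) <= L - sum_n (fun n => Rabs (u n)) M.
Proof.
move=> Hu HU.
have Hl : is_lim_seq (fun N => Rabs (sum_n u N - sum_n u M)) (Rabs (l - sum_n u M)).
  apply: (is_lim_seq_abs _ (Finite (l - sum_n u M))).
  apply: is_lim_seq_minus'; [exact: ser_lim | exact: is_lim_seq_const].
have HL : is_lim_seq (fun N => sum_n (fun n => Rabs (u n)) N - sum_n (fun n => Rabs (u n)) M) (L - sum_n (fun n => Rabs (u n)) M).
  apply: is_lim_seq_minus'; [exact: ser_lim | exact: is_lim_seq_const].
have := is_lim_seq_le_loc _ _ _ _ _ Hl HL; apply.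
exists M => N MN.
have [d ->] : exists d, N = (M + d)%coq_nat by exists (N - M)%coq_nat; lia.
elim: d => [|d IH].
  replace (M + 0)%coq_nat with M by lia.
  rewrite !Rminus_diag Rabs_R0; lra.
replace (M + S d)%coq_nat with (S (M + d)%coq_nat) by lia.
rewrite !sum_Sn /plus /=.
have := Rabs_triang (sum_n u (M + d)%coq_nat - sum_n u M) (u (S (M + d)%coq_nat)).
have -> : sum_n u (M + d)%coq_nat + u (S (M + d)%coq_nat) - sum_n u M =
   sum_n u (M + d)%coq_nat - sum_n u M + u (S (M + d)%coq_nat) by ring.
lra.
Qed.

Lemma sum_n_ext_zero (f : nat -> R) m d : (forall j, (m < j)%coq_nat -> f j = 0) ->
  sum_n f m = sum_n f (m + d)%coq_nat.
Proof.
move=> H; elim: d => [|d IH]; first by replace (m + 0)%coq_nat with m by lia.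
replace (m + S d)%coq_nat with (S (m + d)%coq_nat) by lia.
rewrite sum_Sn H /plus /=; [rewrite IH; symmetry; apply: Rplus_0_r | lia].
Qed.

Lemma finite_sum_lim (g : nat -> nat -> R) K :
  (forall j, is_lim_seq (g j) 0) -> is_lim_seq (fun M => sum_n (fun j => g j M) K) 0.
Proof.
move=> H; elim: K => [|K IH].
  by apply: (is_lim_seq_ext (g 0%nat)) => // M; rewrite sum_O.
apply: (is_lim_seq_ext (fun M => sum_n (fun j => g j M) K + g (S K) M)).
  by move=> M; rewrite sum_Sn.
have -> : (0:Rbar) = Finite (0 + 0) by rewrite Rplus_0_r.
exact: is_lim_seq_plus'.
Qed.

Section Fubini.
Variable c : nat -> nat -> R.
Variables (r Rr : nat -> R) (L LR : R).
Hypothesis Hc0 : forall m j, (m < j)%coq_nat -> c m j = 0.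
Hypothesis Hr : forall j, is_series (fun m => c m j) (r j).
Hypothesis HR : forall j, is_series (fun m => Rabs (c m j)) (Rr j).
Hypothesis HL : is_series r L.
Hypothesis HLR : is_series Rr LR.

Let P j M := sum_n (fun m => c m j) M.
Let Q j M := sum_n (fun m => Rabs (c m j)) M.
Let D M := sum_n (fun j => Rr j - Q j M) M.

Lemma fub_S M : sum_n (fun m => sum_n (fun j => c m j) m) M = sum_n (fun j => P j M) M.
Proof.
rewrite /P -sum_n_switch; apply: sum_n_ext_loc => m mM.
have [d ->] : exists d, M = (m + d)%coq_nat by exists (M - m)%coq_nat; lia.
apply: sum_n_ext_zero => j mj; exact: Hc0.
Qed.

Lemma Q_le j M : Q j M <= Rr j.
Proof. rewrite /Q; apply: partial_le; last exact: (@HR j). move=> n; exact: Rabs_pos. Qed.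

Lemma Q_ge0 j M : 0 <= Q j M.
Proof.
rewrite /Q; apply: Rle_trans (@sum_n_le' (fun _ => 0) (fun m => Rabs (c m j)) M _) => [|j' _].
  by rewrite sum_n_const; lra.
exact: Rabs_pos.
Qed.

Lemma fub_bound M : Rabs (sum_n (fun m => sum_n (fun j => c m j) m) M - sum_n r M) <= D M.
Proof.
rewrite fub_S -sum_n_sub; apply: Rle_trans (sum_n_abs _ _) _.
apply: sum_n_le' => j _.
rewrite Rabs_minus_sym; exact: tail_bound (@Hr j) (@HR j).
Qed.

Lemma D_ge0 M : 0 <= D M.
Proof.
rewrite /D; apply: Rle_trans (@sum_n_le' (fun _ => 0) (fun j => Rr j - Q j M) M _) => [|j' _].
  by rewrite sum_n_const; lra.
have := Q_le j' M; lra.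
Qed.

Lemma D_lim : is_lim_seq D 0.
Proof.
apply/is_lim_seq_spec => eps.
have /is_lim_seq_spec HLR' := ser_lim HLR.
have eps2 : 0 < eps / 2 by have := cond_pos eps; lra.
case: (HLR' (mkposreal _ eps2)) => K HK.
have HE : is_lim_seq (fun M => sum_n (fun j => Rr j - Q j M) K) 0.
  apply: finite_sum_lim => j.
  have -> : (0:Rbar) = Finite (Rr j - Rr j) by rewrite Rminus_diag.
  apply: is_lim_seq_minus'; first exact: is_lim_seq_const.
  exact: ser_lim (@HR j).
have /is_lim_seq_spec HE' := HE.
case: (HE' (mkposreal _ eps2)) => M0 HM0.
exists (Nat.max K M0) => M HM.
have KM : (K <= M)%coq_nat by lia.
have := HK K (le_n _); have := HM0 M ltac:(lia); rewrite /= => h1 h2.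
rewrite Rminus_0_r Rabs_pos_eq; last exact: D_ge0.
have split : D M = sum_n (fun j => Rr j - Q j M) K + sum_n_m (fun j => Rr j - Q j M) (S K) M.
  rewrite /D (sum_n_m_sum_n _ _ _ KM) /minus /plus /opp /=; symmetry; exact: Rplus_minus.
have tailR : sum_n_m (fun j => Rr j - Q j M) (S K) M <= sum_n_m Rr (S K) M.
  apply: sum_n_m_le => j; have := Q_ge0 j M; lra.
have RrM : sum_n Rr M <= LR.
  apply: partial_le; last exact: HLR. move=> n; have := Q_ge0 n 0; have := Q_le n 0; lra.
rewrite (sum_n_m_sum_n Rr _ _ KM) /minus /plus /opp /= in tailR.
rewrite Rminus_0_r in h1.
move: h1 h2; rewrite split.
move=> h1 h2.
have := Rle_abs (sum_n (fun j => Rr j - Q j M) K).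
have := Rabs_def2 _ _ h2.
move: h1 tailR RrM.
set A := sum_n (fun j => Rr j - Q j M) K.
set T := sum_n_m (fun j => Rr j - Q j M) K.+1 M.
set sK := sum_n Rr K.
set sM := sum_n Rr M.
lra.
Qed.

Theorem fubini : is_series (fun m => sum_n (fun j => c m j) m) L.
Proof.
apply: lim_ser.
set S := fun M => sum_n (fun m => sum_n (fun j => c m j) m) M.
have H0 : is_lim_seq (fun M => S M - sum_n r M) 0.
  apply: (is_lim_seq_le_le (fun M => - D M) _ D).
  - move=> M; have := fub_bound M; rewrite /S => h.
    have := Rle_abs (- (sum_n (fun m => sum_n (fun j => c m j) m) M - sum_n r M)).
    have := Rle_abs (sum_n (fun m => sum_n (fun j => c m j) m) M - sum_n r M).
    rewrite Rabs_Ropp; move: h.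
    set X := sum_n (fun m => sum_n (fun j => c m j) m) M.
    set Y := sum_n r M.
    lra.
  - have -> : (0:Rbar) = Rbar_opp (Finite 0) by rewrite /= Ropp_0.
    exact: (proj1 (is_lim_seq_opp D 0) D_lim).
  - exact: D_lim.
apply: (is_lim_seq_ext (fun M => (S M - sum_n r M) + sum_n r M)).
  by move=> M; rewrite /S Rplus_comm; exact: Rplus_minus.
have -> : (L:Rbar) = Finite (0 + L) by rewrite Rplus_0_l.
apply: is_lim_seq_plus' => //; exact: ser_lim.
Qed.

End Fubini.

Lemma hockeyR n j : sum_f_R0 (fun k => INR 'C(k, j)) n = INR 'C(n.+1, j.+1).
Proof. by rewrite -hockey (INR_sum n (fun k => 'C(k, j))) sum_n_Reals. Qed.

Lemma nb j : forall x, Rabs x < 1 ->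
  is_series (fun m => INR 'C(m, j) * x ^ m) (x ^ j / (1 - x) ^ (S j)).
Proof.
elim: j => [|j IH] x Hx.
  apply: (is_series_ext (fun m => x ^ m)).
    by move=> m; rewrite bin0 Rmult_1_l.
  have -> : x ^ 0 / (1 - x) ^ 1 = / (1 - x) by rewrite /=; field; have := Rabs_def2 _ _ Hx; lra.
  exact: is_series_geom.
have Hx1 : 1 - x <> 0 by have := Rabs_def2 _ _ Hx; lra.
have HA := IH x Hx.
have HB := is_series_geom x Hx.
have HAa : ex_series (fun n => Rabs (INR 'C(n, j) * x ^ n)).
  have Hax : Rabs (Rabs x) < 1 by rewrite Rabs_Rabsolu.
  exists ((Rabs x) ^ j / (1 - Rabs x) ^ (S j)).
  apply: (is_series_ext _ _ _ _ (IH _ Hax)) => n.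
  by rewrite Rabs_mult RPow_abs (Rabs_pos_eq (INR _)) //; apply: pos_INR.
have HBa : ex_series (fun n => Rabs (x ^ n)).
  have Hax : Rabs (Rabs x) < 1 by rewrite Rabs_Rabsolu.
  exists (/ (1 - Rabs x)).
  apply: (is_series_ext _ _ _ _ (is_series_geom _ Hax)) => n.
  by rewrite RPow_abs.
have HM := is_series_mult _ _ _ _ HA HB HAa HBa.
have HM' : is_series (fun n => INR 'C(n.+1, j.+1) * x ^ n) (x ^ j / (1 - x) ^ (S j) * / (1 - x)).
  apply: (is_series_ext _ _ _ _ HM) => n.
  rewrite -hockeyR [RHS]Rmult_comm scal_sum; apply: sum_eq => k kn.
  rewrite Rmult_assoc -pow_add; congr (_ * x ^ _); lia.
have HS := is_series_scal_l x _ _ HM'.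
apply: is_series_decr_1.
rewrite bin0n /= Rmult_0_l /opp /plus /= Ropp_0 Rplus_0_r.
have -> : x * x ^ j / ((1 - x) * ((1 - x) * (1 - x) ^ j)) = scal x (x ^ j / (1 - x) ^ (S j) * / (1 - x)).
  rewrite /scal /= /mult /=; field; split => //; apply: pow_nonzero => //.
apply: (is_series_ext _ _ _ _ HS) => n.
by rewrite /scal /= /mult /=; ring.
Qed.

Lemma exp_tail y : is_series (fun j => y ^ (S j) / INR (Factorial.fact (S j))) (exp y - 1).
Proof.
have H := is_exp_Reals y; rewrite /is_pseries in H.
apply: (is_series_ext (fun k => scal (pow_n y (S k)) (/ INR (Factorial.fact (S k))))).
  by move=> k; rewrite pow_n_pow /scal /= /mult /=.
apply: (is_series_incr_1 (fun k => scal (pow_n y k) (/ INR (Factorial.fact k)))).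
have -> : plus (exp y - 1) (scal (pow_n y 0) (/ INR (Factorial.fact 0))) = exp y.
  have E : (exp y - 1) + (1 * / INR (Factorial.fact 0)) = exp y by rewrite /=; field.
  exact: E.
exact: H.
Qed.

Lemma col_series x j : Rabs x < 1 ->
  is_series (fun m => INR 'C(m, j) / INR (Factorial.fact (S j)) * x ^ (S m))
    ((x / (1 - x)) ^ (S j) / INR (Factorial.fact (S j))).
Proof.
move=> Hx.
have Hx1 : 1 - x <> 0 by have := Rabs_def2 _ _ Hx; lra.
have F := fact_pos (S j).
have H := is_series_scal_l (x / INR (Factorial.fact (S j))) _ _ (@nb j x Hx).
apply: (is_series_ext _ _ _ _ _) ; last first.
  have -> : (x / (1 - x)) ^ (S j) / INR (Factorial.fact (S j)) =
     scal (x / INR (Factorial.fact (S j))) (x ^ j / (1 - x) ^ (S j)).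
    rewrite /scal /= /mult /= Rpow_mult_distr pow_inv; field; split; [exact: pow_nonzero | split => //; apply: Rgt_not_eq; exact: F].
  exact: H.
move=> m; rewrite /scal /= /mult /=; field; apply: Rgt_not_eq; exact: F.
Qed.

Theorem series_F x : -1 < x < 1 ->
  is_series (fun n : nat => INR (f_S n) / INR (n`!) * x ^ n) (exp (x / (1 - x))).
Proof.
move=> Hx.
have Hax : Rabs x < 1 by apply: Rabs_def1; lra.
have Hax' : Rabs (Rabs x) < 1 by rewrite Rabs_Rabsolu.
set c := fun m j => INR 'C(m, j) / INR (Factorial.fact (S j)) * x ^ (S m).
have Hfub := @fubini c (fun j => (x / (1 - x)) ^ (S j) / INR (Factorial.fact (S j)))
  (fun j => (Rabs x / (1 - Rabs x)) ^ (S j) / INR (Factorial.fact (S j)))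
  (exp (x / (1 - x)) - 1) (exp (Rabs x / (1 - Rabs x)) - 1).
have H1 : is_series (fun m => sum_n (fun j => c m j) m) (exp (x / (1 - x)) - 1).
  apply: Hfub.
  - move=> m j mj; rewrite /c bin_small; last by apply/ltP.
    by rewrite /= /Rdiv !Rmult_0_l.
  - move=> j; exact: col_series.
  - move=> j; apply: (is_series_ext _ _ _ _ (@col_series (Rabs x) j Hax')) => m.
    rewrite /c Rabs_mult RPow_abs; congr (_ * _); rewrite Rabs_pos_eq //.
    apply: Rmult_le_pos; [apply: pos_INR | apply: Rlt_le; apply: Rinv_0_lt_compat; exact: fact_pos].
  - exact: exp_tail.
  - exact: exp_tail.
apply: (is_series_ext (fun n => a n * x ^ n)).
  by move=> n; rewrite /a fact_eq.
apply: (is_series_decr_1 (fun n => a n * x ^ n)).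
rewrite a0 /= /plus /opp /= Rmult_1_r.
apply: (is_series_ext _ _ _ _ H1) => m.
rewrite aS /c -sum_n_mulr; apply: sum_n_ext => j.
by rewrite /Rdiv.
Qed.

Lemma ln_le_x u : -1 < u -> ln (1 + u) <= u.
Proof.
move=> Hu; rewrite -{2}(ln_exp u); apply: ln_le; first lra.
exact: exp_ineq1_le.
Qed.

Lemma INR_pos_S n : 0 < INR (S n).
Proof. apply: lt_0_INR; lia. Qed.

Lemma ln_fact_S n : ln (INR (Factorial.fact (S n))) = ln (INR (S n)) + ln (INR (Factorial.fact n)).
Proof.
rewrite /= -/(Factorial.fact n).
rewrite -[(Factorial.fact n + (n * Factorial.fact n)%coq_nat)%coq_nat]/((S n) * Factorial.fact n)%coq_nat.
rewrite mult_INR ln_mult //; first exact: INR_pos_S.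
apply: lt_0_INR; have := Factorial.lt_O_fact n; lia.
Qed.

Lemma lnfact_lo n : INR (S n) * ln (INR (S n)) - INR (S n) <= ln (INR (Factorial.fact (S n))).
Proof.
elim: n => [|n IH].
  rewrite /= ln_1; lra.
rewrite ln_fact_S.
set m := INR (S n) in IH *.
have Hm : 0 < m by exact: INR_pos_S.
have -> : INR (S (S n)) = m + 1 by rewrite S_INR.
have Hl : ln (m + 1) - ln m <= 1 / m.
  have -> : m + 1 = m * (1 + 1 / m) by field; lra.
  have h : 0 < 1 / m by apply: Rdiv_lt_0_compat; lra.
  rewrite ln_mult; [ | lra | lra].
  have := ln_le_x (u := 1 / m) ltac:(lra); lra.
have : m * (ln (m + 1) - ln m) <= 1.
  apply: (Rle_trans _ (m * (1 / m))); first by apply: Rmult_le_compat_l; lra.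
  right; field; lra.
lra.
Qed.

Lemma lnfact_hi n : ln (INR (Factorial.fact n)) <= (INR n + 1) * ln (INR n + 1) - INR n.
Proof.
elim: n => [|n IH].
  rewrite /= ln_1 Rplus_0_l ln_1; lra.
rewrite ln_fact_S S_INR.
set m := INR n in IH *.
have Hm : 0 <= m by exact: pos_INR.
(* need: ln(m+1) + (m+1) ln(m+1) - m <= (m+2) ln(m+2) - (m+1) *)
have key : (m + 2) * (ln (m + 1) - ln (m + 2)) <= -1.
  have -> : m + 1 = (m + 2) * (1 + (-1 / (m + 2))) by field; lra.
  have h1 : -1 < -1 / (m + 2).
    have : 1 / (m + 2) < 1 by apply/Rlt_div_l; lra.
    rewrite /Rdiv; lra.
  rewrite ln_mult; [| lra | lra].
  have := ln_le_x h1.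
  move=> h.
  have -> : ln (m + 2) + ln (1 + -1 / (m + 2)) - ln (m + 2) = ln (1 + -1 / (m + 2)) by ring.
  apply: (Rle_trans _ ((m + 2) * (-1 / (m + 2)))); first by apply: Rmult_le_compat_l; lra.
  right; field; lra.
have -> : m + 1 + 1 = m + 2 by ring.
lra.
Qed.

Lemma INR_expn m j : INR (expn m j) = INR m ^ j.
Proof. elim: j => [|j IH] //; rewrite expnS INR_muln IH //. Qed.

Lemma sum_n_ge0 (f : nat -> R) m : (forall j, 0 <= f j) -> 0 <= sum_n f m.
Proof.
move=> H; elim: m => [|m IH]; first by rewrite sum_O.
rewrite sum_Sn /plus /=; have := H (S m); lra.
Qed.

Lemma sum_first (f : nat -> R) m : (forall j, 0 <= f j) -> f 0%nat <= sum_n f m.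
Proof.
move=> H; elim: m => [|m IH]; first by rewrite sum_O; lra.
rewrite sum_Sn /plus /=; have := H (S m); lra.
Qed.

Lemma sum_sq (u : nat -> R) m : (forall j, 0 <= u j) -> sum_n (fun j => u j ^ 2) m <= (sum_n u m) ^ 2.
Proof.
move=> H; elim: m => [|m IH]; first by rewrite !sum_O; lra.
rewrite !sum_Sn /plus /=.
have := sum_n_ge0 m H; have := H (S m).
move: IH; set A := sum_n (fun j => u j ^ 2) m; set B := sum_n u m; set c := u (S m).
move=> IH h1 h2; nra.
Qed.

Lemma a_lo m : 1 <= a (S m).
Proof.
rewrite aS.
have H : forall j, 0 <= INR 'C(m, j) / INR (Factorial.fact (S j)).
  move=> j; apply: Rmult_le_pos; first exact: pos_INR.
  apply: Rlt_le; apply: Rinv_0_lt_compat; exact: fact_pos.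
apply: Rle_trans (sum_first m H).
rewrite bin0 /=; lra.
Qed.

Lemma term_bound m j : INR 'C(m, j) / INR (Factorial.fact (S j)) <=
  (sqrt (INR (S m)) ^ j / INR (Factorial.fact j)) ^ 2.
Proof.
have F := fact_pos j.
have F1 : INR (Factorial.fact j) <= INR (Factorial.fact (S j)).
  apply: le_INR; rewrite /=; lia.
have HC : INR 'C(m, j) * INR (Factorial.fact j) <= INR m ^ j.
  rewrite -INR_expn -fact_eq -INR_muln; apply: le_INR; apply/leP; exact: bin_le.
have Hm : INR m ^ j <= INR (S m) ^ j.
  apply: pow_incr; split; first exact: pos_INR.
  rewrite S_INR; lra.
have Hs : (sqrt (INR (S m)) ^ j) ^ 2 = INR (S m) ^ j.
  rewrite -pow_mult Nat.mul_comm pow_mult.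
  by rewrite -Rsqr_pow2 Rsqr_sqrt //; apply: pos_INR.
rewrite Rpow_mult_distr Hs pow_inv.
have C0 := pos_INR 'C(m, j).
have e1 : INR 'C(m, j) / INR (Factorial.fact (S j)) <= INR 'C(m, j) / INR (Factorial.fact j).
  apply: Rmult_le_compat_l => //; apply: Rinv_le_contravar => //.
have e2 : INR 'C(m, j) / INR (Factorial.fact j) = (INR 'C(m, j) * INR (Factorial.fact j)) * / INR (Factorial.fact j) ^ 2.
  by field; lra.
have e3 : (INR 'C(m, j) * INR (Factorial.fact j)) * / INR (Factorial.fact j) ^ 2 <= INR (S m) ^ j * / INR (Factorial.fact j) ^ 2.
  apply: Rmult_le_compat_r; last lra.
  apply: Rlt_le; apply: Rinv_0_lt_compat; apply: pow_lt; lra.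
lra.
Qed.

Lemma a_hi m : a (S m) <= exp (2 * sqrt (INR (S m))).
Proof.
set s := sqrt (INR (S m)).
have s0 : 0 <= s by apply: sqrt_pos.
have u0 : forall j, 0 <= s ^ j / INR (Factorial.fact j).
  move=> j; apply: Rmult_le_pos; first exact: pow_le.
  apply: Rlt_le; apply: Rinv_0_lt_compat; exact: fact_pos.
rewrite aS.
apply: (Rle_trans _ _ _ (sum_n_le' (g := fun j => (s ^ j / INR (Factorial.fact j)) ^ 2) _)).
  by move=> j _; exact: term_bound.
apply: (Rle_trans _ _ _ (sum_sq m u0)).
have T := exp_ge_taylor s m s0; rewrite -sum_n_Reals in T.
have S0 := sum_n_ge0 m u0.
have -> : exp (2 * s) = exp s ^ 2 by rewrite /= Rmult_1_r -exp_plus; congr exp; ring.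
apply: pow_incr; split => //.
Qed.

Lemma ln_sq_bound N : 1 <= N -> ln (N + 1) <= 4 * sqrt N.
Proof.
move=> N1.
set t := sqrt (N + 1).
have t0 : 0 <= t by apply: sqrt_pos.
have tt : t * t = N + 1 by rewrite /t sqrt_sqrt //; lra.
have t1 : 1 < t.
  have : 1 < t * t by lra.
  nra.
have -> : ln (N + 1) = 2 * ln t.
  by rewrite -tt ln_mult; [ring | lra | lra].
have := ln_le_x (u := t - 1) ltac:(lra).
have -> : 1 + (t - 1) = t by ring.
have s0 : 0 <= sqrt N by apply: sqrt_pos.
have ss : sqrt N * sqrt N = N by rewrite sqrt_sqrt //; lra.
have : t <= 2 * sqrt N by nra.
lra.
Qed.

Definition Lseq m := ln (INR (f_S (S m))) / INR (S m) - ln (INR (S m)).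

Lemma f_eq m : INR (f_S (S m)) = a (S m) * INR (Factorial.fact (S m)).
Proof. rewrite /a; field; apply: Rgt_not_eq; exact: fact_pos. Qed.

Lemma Lseq_bounds m : -1 <= Lseq m <= -1 + 7 / sqrt (INR (S m)).
Proof.
set N := INR (S m).
have N1 : 1 <= N by rewrite /N S_INR; have := pos_INR m; lra.
set s := sqrt N.
have ss : s * s = N by rewrite /s sqrt_sqrt //; lra.
have s0 : 0 <= s by apply: sqrt_pos.
have s1 : 1 <= s by nra.
have alo := a_lo m.
have ahi := a_hi m.
have Fp := fact_pos (S m).
have lnf : ln (INR (f_S (S m))) = ln (a (S m)) + ln (INR (Factorial.fact (S m))).
  by rewrite f_eq ln_mult //; lra.
have la0 : 0 <= ln (a (S m)) by rewrite -ln_1; apply: ln_le; lra.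
have la1 : ln (a (S m)) <= 2 * s.
  rewrite -[X in _ <= X]ln_exp; apply: ln_le => //; lra.
have flo := lnfact_lo m.
have fhi := lnfact_hi (S m).
rewrite -/N in flo fhi.
have lN1 : ln (N + 1) - ln N <= 1 / N.
  have -> : N + 1 = N * (1 + 1 / N) by field; lra.
  have h : 0 < 1 / N by apply: Rdiv_lt_0_compat; lra.
  rewrite ln_mult; [ | lra | lra].
  have := ln_le_x (u := 1 / N) ltac:(lra); lra.
have lns := ln_sq_bound N1; rewrite -/s in lns.
rewrite /Lseq lnf -/N.
have e : forall A, A / N = A / (s * s) by move=> A; rewrite ss.
have Ns : 0 < N by lra.
split.
  apply: (Rle_trans _ ((N * ln N - N) / N - ln N)).
    right; field; lra.
  apply: Rplus_le_compat_r; apply: Rmult_le_compat_r.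
    by apply: Rlt_le; apply: Rinv_0_lt_compat.
  lra.
apply: (Rle_trans _ (((N + 1) * ln (N + 1) - N + 2 * s) / N - ln N)).
  apply: Rplus_le_compat_r; apply: Rmult_le_compat_r.
    by apply: Rlt_le; apply: Rinv_0_lt_compat.
  lra.
have -> : ((N + 1) * ln (N + 1) - N + 2 * s) / N - ln N =
  (ln (N + 1) - ln N) + ln (N + 1) / N - 1 + 2 * s / N by field; lra.
have b1 : 1 / N <= 1 / s.
  apply: Rmult_le_compat_l; first lra.
  have sN : s <= N by nra.
  apply: Rinv_le_contravar; lra.
have b2 : ln (N + 1) / N <= 4 / s.
  apply: (Rle_trans _ (4 * s / N)).
    apply: Rmult_le_compat_r => //; apply: Rlt_le; apply: Rinv_0_lt_compat; lra.
  right; rewrite -ss; field; lra.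
have b3 : 2 * s / N = 2 / s by rewrite -ss; field; lra.
have -> : 7 / s = 1 / s + 4 / s + 2 / s by field; lra.
lra.
Qed.

Lemma inv_sqrt_lim : is_lim_seq (fun m => / sqrt (INR (S m))) 0.
Proof.
have H : is_lim_seq (fun m => sqrt (INR (S m))) p_infty.
  apply/is_lim_seq_spec => M.
  have /is_lim_seq_spec HI := is_lim_seq_INR.
  case: (HI (M * M)) => N0 HN0.
  exists N0 => n Hn.
  have h := HN0 (S n) ltac:(lia).
  have : sqrt (M * M) < sqrt (INR (S n)).
    apply: sqrt_lt_1_alt; split => //; nra.
  rewrite -[M * M]/(Rsqr M) sqrt_Rsqr_abs.
  have := Rle_abs M; lra.
have := is_lim_seq_inv _ _ H; apply => //.
Qed.

Lemma series_T x : -1 < x < 1 ->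
  is_series (fun n : nat => INR (t_S n) / INR (n`!) * x ^ n) (x / (1 - x)).
Proof.
move=> Hx.
have Hax : Rabs x < 1 by apply: Rabs_def1; lra.
apply: (is_series_decr_1 (fun n : nat => INR (t_S n) / INR (n`!) * x ^ n)).
rewrite t_S0 /= /plus /opp /=.
replace (x / (1 - x) + - (0 / 1 * 1)) with (scal x (/ (1 - x))); last first.
  rewrite /scal /= /mult /=; field; lra.
have H := is_series_scal_l x _ _ (is_series_geom x Hax).
apply: (is_series_ext _ _ _ _ H) => n.
rewrite t_S_fact // /scal /= /mult /=.
have F := fact_pos (S n); rewrite -fact_eq in F.
field; lra.
Qed.

Lemma lim_part : is_lim_seq (fun n : nat => Rpower (INR (f_S n)) (/ INR n) / INR n) (exp (-1)).
Proof.
apply/is_lim_seq_incr_1.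
have HL : is_lim_seq Lseq (-1).
  apply: (is_lim_seq_le_le (fun _ => -1) _ (fun m => -1 + 7 * / sqrt (INR (S m)))).
  - move=> m; exact: Lseq_bounds.
  - exact: is_lim_seq_const.
  - have -> : (-1 : Rbar) = Finite (-1 + 7 * 0) by congr Finite; ring.
    apply: is_lim_seq_plus'; first exact: is_lim_seq_const.
    apply: (is_lim_seq_mult' (fun _ => 7)); first exact: is_lim_seq_const.
    exact: inv_sqrt_lim.
have HE := is_lim_seq_continuous exp Lseq (-1) (derivable_continuous_pt _ _ (derivable_pt_exp (-1))) HL.
apply: (is_lim_seq_ext _ _ _ _ HE) => m.
rewrite /Lseq /Rpower /Rminus exp_plus exp_Ropp exp_ln; last exact: INR_pos_S.
congr (exp _ * _); rewrite /Rdiv; ring.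
Qed.


Theorem proposition5p14 :
  (forall n : nat, leq 1 n -> t_S n = n`!) /\
  (forall x : R, -1 < x < 1 ->
     is_series (fun n : nat => INR (t_S n) / INR (n`!) * x ^ n) (x / (1 - x))) /\
  (forall x : R, -1 < x < 1 ->
     is_series (fun n : nat => INR (f_S n) / INR (n`!) * x ^ n) (exp (x / (1 - x)))) /\
  is_lim_seq (fun n : nat => Rpower (INR (f_S n)) (/ INR n) / INR n) (exp (-1)).
Proof.
split; first exact: t_S_fact.
split; first exact: series_T.
split; first exact: series_F.
exact: lim_part.
Qed.
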